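(* Let ${\bm X},{\bm Y}$ be finite sets with $n=|{\bm X}|$, $m=|{\bm Y}|$, let $m^{\bm X}_\bullet,m^{\bm Y}_\bullet$ be Markov transition kernels on them, $C\in\mathbb{R}_+^{n\times m}$ a cost matrix, $\delta\in(0,1]$ and $\epsilon\ge0$. Define $C^{\epsilon,\delta,(0)}=C$ and $C^{\epsilon,\delta,(l)}_{ij}=\delta C_{ij}+(1-\delta)d^\epsilon_{\mathrm W}(m^{\bm X}_i,m^{\bm Y}_j;C^{\epsilon,\delta,(l-1)})$ for $l\ge1$. Then $C^{\epsilon,\delta,(k)}$ converges as $k\to\infty$ to the unique fixed point $C^{\epsilon,\delta,(\infty)}$ of the map $D\mapsto\big(\delta C_{ij}+(1-\delta)d^\epsilon_{\mathrm W}(m^{\bm X}_i,m^{\bm Y}_j;D)\big)_{i,j}$, and for all $k$, $$\|C^{\epsilon,\delta,(k)}-C^{\epsilon,\delta,(\infty)}\|_\infty\le\frac{(1-\delta)^k}{\delta}\big(2\|C\|_\infty+\epsilon\log(nm)\big).$$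
   Context: For $\alpha\in\mathcal{P}({\bm X}),\beta\in\mathcal{P}({\bm Y})$, cost $D$ and $\epsilon\ge0$, $d^{\epsilon}_{\mathrm W}(\alpha,\beta;D)=\min_{P\in\mathcal{C}(\alpha,\beta)}\sum_{i,j}P_{ij}D_{ij}+\epsilon\sum_{i,j}P_{ij}\log P_{ij}$, with $\mathcal{C}(\alpha,\beta)$ the set of couplings. $\|\cdot\|_\infty$ is the entrywise max norm. *)

(* Defs.v *)
From HB Require Import structures.
From mathcomp Require Import all_boot all_order all_algebra.
From mathcomp Require Import all_classical all_reals all_analysis.
Set Implicit Arguments. Unset Strict Implicit. Unset Printing Implicit Defensive.
Import Order.TTheory GRing.Theory Num.Theory.
Local Open Scope classical_set_scope.
Local Open Scope ring_scope.

Section Defs.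
Variable R : realType.

Definition xlogx (x : R) : R := if x == 0 then 0 else x * ln x.

Definition is_prob (n : nat) (a : 'I_n -> R) : Prop :=
  (forall i, 0 <= a i) /\ \sum_i a i = 1.

Definition markov_kernel (n : nat) (M : 'M[R]_n) : Prop :=
  forall i, is_prob (fun k => M i k).

Definition coupling (n m : nat) (a : 'I_n -> R) (b : 'I_m -> R)
  (P : 'M[R]_(n, m)) : Prop :=
  [/\ forall i j, 0 <= P i j,
      forall i, \sum_j P i j = a i &
      forall j, \sum_i P i j = b j].

Definition dW (n m : nat) (eps : R) (a : 'I_n -> R) (b : 'I_m -> R)
  (D : 'M[R]_(n, m)) : R :=
  inf [set (\sum_i \sum_j (P i j * D i j + eps * xlogx (P i j)))
       | P in [set P | coupling a b P]].

Definition wl_map (n m : nat) (mX : 'M[R]_n) (mY : 'M[R]_m)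
  (C : 'M[R]_(n, m)) (delta eps : R) (D : 'M[R]_(n, m)) : 'M[R]_(n, m) :=
  \matrix_(i, j) (delta * C i j + (1 - delta) *
     dW eps (fun k => mX i k) (fun l => mY j l) D).

Definition wl_iter (n m : nat) (mX : 'M[R]_n) (mY : 'M[R]_m)
  (C : 'M[R]_(n, m)) (delta eps : R) (k : nat) : 'M[R]_(n, m) :=
  iter k (wl_map mX mY C delta eps) C.

Definition maxnorm (n m : nat) (A : 'M[R]_(n, m)) : R :=
  \big[Num.max/0]_(i < n) \big[Num.max/0]_(j < m) `|A i j|.

End Defs.

(* Main.v *)
Require Import Defs.
From HB Require Import structures.
From mathcomp Require Import all_boot all_order all_algebra.
From mathcomp Require Import all_classical all_reals all_analysis.
From mathcomp Require Import ring lra.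
Import Order.TTheory GRing.Theory Num.Theory numFieldNormedType.Exports.
Local Open Scope classical_set_scope.
Local Open Scope ring_scope.
Set Implicit Arguments. Unset Strict Implicit. Unset Printing Implicit Defensive.

Lemma maxnorm_ge (R : realType) n m (A : 'M[R]_(n,m)) i j : `|A i j| <= maxnorm A.
Proof.
rewrite /maxnorm.
apply: (le_trans _ (le_bigmax _ (fun i => \big[Num.max/0]_(j < m) `|A i j|) i)).
exact: (le_bigmax _ (fun j => `|A i j|) j).
Qed.

Lemma maxnorm_le (R : realType) n m (A : 'M[R]_(n,m)) B :
  0 <= B -> (forall i j, `|A i j| <= B) -> maxnorm A <= B.
Proof.
by move=> B0 h; apply: bigmax_le => // i _; apply: bigmax_le => // j _; exact: h.
Qed.

Lemma maxnorm_ge0 (R : realType) n m (A : 'M[R]_(n,m)) : 0 <= maxnorm A.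
Proof.
rewrite /maxnorm; apply: (big_ind (fun x : R => 0 <= x)) => //.
  by move=> x y x0 y0; rewrite le_max x0.
move=> i _; apply: (big_ind (fun x : R => 0 <= x)) => //.
  by move=> x y x0 y0; rewrite le_max x0.
Qed.

Lemma xlogx_lb (R : realType) (N p : R) : 0 < N -> 0 <= p ->
  p - N^-1 - p * ln N <= xlogx p.
Proof.
move=> N0 p0; rewrite /xlogx; case: eqP => [->|/eqP pn0].
  by rewrite mul0r subr0 sub0r oppr_le0 invr_ge0 ltW.
have pp : 0 < p by rewrite lt_neqAle eq_sym pn0.
have Np : 0 < N * p by rewrite mulr_gt0.
have h := expR_ge1Dx (- ln (N * p)).
rewrite expRN lnK ?posrE // lnM ?posrE // in h.
have e : p - N^-1 - p * ln N = p * (1 - (N * p)^-1) - p * ln N.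
  by field; apply/andP; split; rewrite gt_eqF.
rewrite e.
have : p * (1 - (N * p)^-1) <= p * (ln N + ln p).
  apply: ler_wpM2l; first exact: ltW.
  move: h; rewrite opprD; lra.
move=> hh; rewrite mulrDr in hh *; lra.
Qed.

Lemma xlogx_le0 (R : realType) (p : R) : 0 <= p -> p <= 1 -> xlogx p <= 0.
Proof.
move=> p0 p1; rewrite /xlogx; case: eqP => // _.
by rewrite mulr_ge0_le0 // ln_le0.
Qed.

Lemma ln_nat_ge0 (R : realType) (k : nat) : 0 <= ln (k%:R : R).
Proof.
case: k => [|k]; first by rewrite ln0.
by apply: ln_ge0; rewrite ler1n.
Qed.

Definition objf (R : realType) n m (eps : R) (D P : 'M[R]_(n, m)) : R :=
  \sum_i \sum_j (P i j * D i j + eps * xlogx (P i j)).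

Lemma coupling_sum1 (R : realType) n m (a : 'I_n -> R) (b : 'I_m -> R) P :
  coupling a b P -> is_prob a -> \sum_i \sum_j P i j = 1.
Proof.
case=> _ hr _ [_ ha]; rewrite -ha; apply: eq_bigr => i _; exact: hr.
Qed.

Lemma coupling_nm (R : realType) n m (a : 'I_n -> R) (b : 'I_m -> R) P :
  coupling a b P -> is_prob a -> 0 < (n * m)%:R :> R.
Proof.
move=> hc ha; have s1 := coupling_sum1 hc ha.
rewrite ltr0n muln_gt0; apply/andP; split; rewrite lt0n; apply/eqP => e0.
  move: P a hc ha s1; rewrite e0 => P a _ _; rewrite big_ord0 => h.
  by have := @oner_neq0 R; rewrite -h eqxx.
move: P b hc ha s1; rewrite e0 => P b _ _.
rewrite big1 => [h|i _]; last by rewrite big_ord0.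
by have := @oner_neq0 R; rewrite -h eqxx.
Qed.

Lemma entropy_lb (R : realType) n m (a : 'I_n -> R) (b : 'I_m -> R) P :
  coupling a b P -> is_prob a ->
  - ln ((n * m)%:R : R) <= \sum_i \sum_j xlogx (P i j).
Proof.
move=> hc ha; have s1 := coupling_sum1 hc ha; have N0 := coupling_nm hc ha.
case: (hc) => hP _ _.
set N : R := (n * m)%:R in N0 *.
apply: (le_trans _ (ler_sum _ (fun i _ => ler_sum _ (fun j _ => xlogx_lb N0 (hP i j))))).
have -> : \sum_(i < n) \sum_(j < m) (P i j - N^-1 - P i j * ln N) =
  \sum_i \sum_j P i j - \sum_(i < n) \sum_(j < m) N^-1 - (\sum_i \sum_j P i j) * ln N.
  rewrite mulr_suml -!sumrB; apply: eq_bigr => i _.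
  by rewrite mulr_suml -!sumrB.
rewrite s1 !sumr_const !card_ord -mulrnA.
rewrite -mulr_natr mulnC -/N mulVf ?gt_eqF //.
lra.
Qed.

Lemma obj_lb (R : realType) n m (a : 'I_n -> R) (b : 'I_m -> R) (eps L : R) (D P : 'M[R]_(n, m)) :
  coupling a b P -> is_prob a -> 0 <= eps -> (forall i j, L <= D i j) ->
  L - eps * ln ((n * m)%:R) <= objf eps D P.
Proof.
move=> hc ha e0 hL; have s1 := coupling_sum1 hc ha.
have hE := entropy_lb hc ha; case: (hc) => hP _ _.
rewrite /objf.
have -> : \sum_i \sum_j (P i j * D i j + eps * xlogx (P i j)) =
   \sum_i \sum_j (P i j * D i j) + eps * \sum_i \sum_j xlogx (P i j).
  rewrite mulr_sumr -big_split; apply: eq_bigr => i _.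
  by rewrite mulr_sumr -big_split.
apply: lerD.
  apply: (@le_trans _ _ (\sum_i \sum_j (P i j * L))).
    by under eq_bigr do rewrite -mulr_suml; rewrite -mulr_suml s1 mul1r.
  apply: ler_sum => i _; apply: ler_sum => j _; exact: ler_wpM2l.
by rewrite -mulrN ler_wpM2l.
Qed.

Definition prodc (R : realType) n m (a : 'I_n -> R) (b : 'I_m -> R) : 'M[R]_(n, m) :=
  \matrix_(i, j) (a i * b j).

Lemma prodc_coupling (R : realType) n m (a : 'I_n -> R) (b : 'I_m -> R) :
  is_prob a -> is_prob b -> coupling a b (prodc a b).
Proof.
move=> [a0 a1] [b0 b1]; split.
- by move=> i j; rewrite mxE mulr_ge0.
- by move=> i; under eq_bigr do rewrite mxE; rewrite -mulr_sumr b1 mulr1.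
- by move=> j; under eq_bigr do rewrite mxE; rewrite -mulr_suml a1 mul1r.
Qed.

Lemma dW_set (R : realType) n m (a : 'I_n -> R) (b : 'I_m -> R) (eps : R) (D : 'M[R]_(n, m)) :
  is_prob a -> is_prob b -> 0 <= eps ->
  let S := [set objf eps D P | P in [set P | coupling a b P]] in
  S !=set0 /\ has_lbound S.
Proof.
move=> ha hb e0 S; split.
  by exists (objf eps D (prodc a b)); exists (prodc a b) => //; exact: prodc_coupling.
exists (- maxnorm D - eps * ln ((n * m)%:R)) => _ [P hP <-].
apply: (obj_lb hP ha e0) => i j.
have := maxnorm_ge D i j; rewrite ler_norml => /andP[+ _].
by rewrite lerNl.
Qed.

Lemma dW_lip (R : realType) n m (a : 'I_n -> R) (b : 'I_m -> R) (eps e : R)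
  (D D' : 'M[R]_(n, m)) :
  is_prob a -> is_prob b -> 0 <= eps -> (forall i j, D i j <= D' i j + e) ->
  dW eps a b D <= dW eps a b D' + e.
Proof.
move=> ha hb e0 hD.
have [_ lbD] := dW_set D ha hb e0.
have [neD' _] := dW_set D' ha hb e0.
rewrite -lerBlDr; apply: lb_le_inf => // _ [P hP <-].
rewrite lerBlDr.
apply: (le_trans (ge_inf lbD _)); first by exists P.
have s1 := coupling_sum1 hP ha; case: (hP) => hP0 _ _.
rewrite /objf.
apply: (@le_trans _ _ (\sum_i \sum_j (P i j * (D' i j + e) + eps * xlogx (P i j)))).
  apply: ler_sum => i _; apply: ler_sum => j _; rewrite lerD2r; exact: ler_wpM2l.
rewrite -[X in _ <= _ + X]mul1r -s1 mulr_suml -big_split; apply: ler_sum => i _.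
rewrite mulr_suml -big_split; apply: ler_sum => j _.
by rewrite mulrDr addrAC.
Qed.

Lemma wl_map_lip (R : realType) n m (mX : 'M[R]_n) (mY : 'M[R]_m) (C : 'M[R]_(n, m))
  (delta eps e : R) (D D' : 'M[R]_(n, m)) :
  markov_kernel mX -> markov_kernel mY -> 0 <= eps -> delta <= 1 ->
  (forall i j, `|D i j - D' i j| <= e) ->
  forall i j, `|wl_map mX mY C delta eps D i j - wl_map mX mY C delta eps D' i j|
     <= (1 - delta) * e.
Proof.
move=> hX hY e0 d1 hD i j; rewrite !mxE.
have -> : delta * C i j + (1 - delta) * dW eps (fun k => mX i k) (fun l => mY j l) D -
  (delta * C i j + (1 - delta) * dW eps (fun k => mX i k) (fun l => mY j l) D') =
  (1 - delta) * (dW eps (fun k => mX i k) (fun l => mY j l) D -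
     dW eps (fun k => mX i k) (fun l => mY j l) D') by ring.
rewrite normrM ger0_norm ?subr_ge0 //; apply: ler_wpM2l; first by rewrite subr_ge0.
rewrite ler_norml; apply/andP; split.
  suff : dW eps (fun k => mX i k) (fun l => mY j l) D' <=
     dW eps (fun k => mX i k) (fun l => mY j l) D + e by lra.
  apply: dW_lip => // k l; have := hD k l; rewrite ler_norml => /andP[h _]; lra.
suff : dW eps (fun k => mX i k) (fun l => mY j l) D <=
     dW eps (fun k => mX i k) (fun l => mY j l) D' + e by lra.
apply: dW_lip => // k l; have := hD k l; rewrite ler_norml => /andP[_ h]; lra.
Qed.

Lemma dWC_bounds (R : realType) n m (a : 'I_n -> R) (b : 'I_m -> R) (eps : R)
  (C : 'M[R]_(n, m)) :
  is_prob a -> is_prob b -> 0 <= eps -> (forall i j, 0 <= C i j) ->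
  - (eps * ln ((n * m)%:R)) <= dW eps a b C <= maxnorm C.
Proof.
move=> ha hb e0 hC.
have [ne lb] := dW_set C ha hb e0.
apply/andP; split.
  apply: lb_le_inf => // _ [P hP <-].
  by rewrite -sub0r; apply: (obj_lb hP ha e0).
apply: (le_trans (ge_inf lb _)).
  by exists (prodc a b) => //; exact: prodc_coupling.
have [a0 a1] := ha; have [b0 b1] := hb.
have le1 : forall (k : nat) (c : 'I_k -> R) i, (forall i, 0 <= c i) -> \sum_i c i = 1 -> c i <= 1.
  move=> k c i c0 <-; rewrite (bigD1 i) //= lerDl; exact: sumr_ge0.
rewrite /objf.
apply: (@le_trans _ _ (\sum_i \sum_j (a i * (b j * maxnorm C)))).
  apply: ler_sum => i _; apply: ler_sum => j _; rewrite mxE.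
  have ab0 : 0 <= a i * b j by rewrite mulr_ge0.
  have hx : eps * xlogx (a i * b j) <= 0.
    by rewrite mulr_ge0_le0 // xlogx_le0 // mulr_ile1 // le1.
  have hc : a i * b j * C i j <= a i * b j * maxnorm C.
    by apply: ler_wpM2l => //; apply: le_trans (maxnorm_ge C i j); exact: ler_norm.
  by rewrite mulrA; lra.
under eq_bigr do rewrite -mulr_sumr -mulr_suml b1 mul1r.
by rewrite -mulr_suml a1 mul1r.
Qed.

Lemma geo0 (R : realType) (q c r : R) : 0 <= q -> q < 1 ->
  (forall k, `|r| <= c * q ^+ k) -> r = 0.
Proof.
move=> q0 q1 h.
have cv : (fun k => c * q ^+ k) @ \oo --> 0.
  rewrite -(mulr0 c); apply: cvgM; first exact: cvg_cst.
  by apply: cvg_expr; rewrite ger0_norm.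
have : `|r| <= lim ((fun k => c * q ^+ k) @ \oo).
  apply: limr_ge; first by apply/cvg_ex; exists 0.
  by apply: nearW => k; exact: h.
rewrite (cvg_lim _ cv) // => hr.
by apply/normr0_eq0/eqP; rewrite eq_le hr normr_ge0.
Qed.

Theorem proposition37 (R : realType) (n m : nat)
  (mX : 'M[R]_n) (mY : 'M[R]_m) (C : 'M[R]_(n, m)) (delta eps : R) :
  markov_kernel mX -> markov_kernel mY ->
  (forall i j, 0 <= C i j) ->
  0 < delta -> delta <= 1 -> 0 <= eps ->
  exists Cinf : 'M[R]_(n, m),
    [/\ wl_map mX mY C delta eps Cinf = Cinf,
        (forall D, wl_map mX mY C delta eps D = D -> D = Cinf),
        (forall i j, wl_iter mX mY C delta eps k i j @[k --> \oo] --> Cinf i j) &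
        (forall k : nat,
           maxnorm (wl_iter mX mY C delta eps k - Cinf)
           <= (1 - delta) ^+ k / delta * (2 * maxnorm C + eps * ln ((n * m)%:R)))].
Proof.
move=> hX hY hC d0 d1 e0.
set q := 1 - delta.
have q0 : 0 <= q by rewrite /q subr_ge0.
have q1 : q < 1 by rewrite /q; lra.
set T := wl_map mX mY C delta eps.
have Tlip : forall (D D' : 'M[R]_(n, m)) e, (forall i j, `|D i j - D' i j| <= e) ->
    forall i j, `|T D i j - T D' i j| <= q * e.
  by move=> D D' e h; apply: wl_map_lip.
set x := fun k => wl_iter mX mY C delta eps k.
have xS : forall k, x k.+1 = T (x k) by [].
set K := maxnorm C + eps * ln ((n * m)%:R).
have lnN0 := @ln_nat_ge0 R (n * m).
have M0 := maxnorm_ge0 C.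
have K0 : 0 <= K by rewrite /K addr_ge0 // mulr_ge0.
have step0 : forall i j, `|x 1%N i j - x 0%N i j| <= K.
  move=> i j; rewrite xS /x /= /wl_iter /= /T /wl_map mxE.
  have [hl hu] := andP (dWC_bounds (hX i) (hY j) e0 hC).
  have Ci := maxnorm_ge C i j; have Ci0 := hC i j.
  rewrite ger0_norm // in Ci.
  set w := dW _ _ _ _ in hl hu *.
  have -> : delta * C i j + (1 - delta) * w - C i j = q * (w - C i j) by rewrite /q; ring.
  rewrite normrM ger0_norm //.
  have : `|w - C i j| <= K.
    have EL0 : 0 <= eps * ln ((n * m)%:R : R) by rewrite mulr_ge0.
    rewrite ler_norml /K; apply/andP; split; lra.
  move=> h; apply: le_trans h; rewrite -[X in _ <= X]mul1r; apply: ler_wpM2r => //; exact: ltW.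
have steps : forall k i j, `|x k.+1 i j - x k i j| <= q ^+ k * K.
  elim=> [|k IH] i j; first by rewrite expr0 mul1r; exact: step0.
  rewrite (xS k.+1) (xS k) exprS -mulrA; apply: Tlip => i' j'; rewrite -xS; exact: IH.
have cum : forall k p i j, `|x (k + p)%N i j - x k i j| <= (q ^+ k - q ^+ (k + p)) / delta * K.
  move=> k; elim=> [|p IH] i j; first by rewrite addn0 !subrr mul0r mul0r normr0.
  rewrite addnS; apply: (le_trans (ler_distD (x (k + p)%N i j) _ _)).
  have h1 := steps (k + p)%N i j.
  have h2 := IH i j.
  have -> : (q ^+ k - q ^+ (k + p).+1) / delta * K =
     q ^+ (k + p) * K + (q ^+ k - q ^+ (k + p)) / delta * K.
    rewrite exprS /q; field; exact: lt0r_neq0.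
  exact: lerD.
have bnd : forall k p i j, `|x (k + p)%N i j - x k i j| <= q ^+ k / delta * K.
  move=> k p i j; apply: (le_trans (cum k p i j)).
  apply: ler_wpM2r => //; apply: ler_wpM2r; first by rewrite invr_ge0 ltW.
  by rewrite lerBlDr lerDl exprn_ge0.
have cvx : forall i j, cvg ((fun k => x k i j) @ \oo).
  move=> i j.
  set v := fun k => x k i j + q ^+ k / delta * K.
  set w := fun k => q ^+ k / delta * K.
  have vcv : cvg (v @ \oo).
    apply: nonincreasing_is_cvgn.
      apply/nonincreasing_seqP => k; rewrite /v.
      have := steps k i j; rewrite ler_norml => /andP[_ h].
      have -> : q ^+ k.+1 / delta * K = q ^+ k / delta * K - q ^+ k * K.
        rewrite exprS /q; field; exact: lt0r_neq0.
      lra.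
    exists (x 0%N i j - 1 / delta * K) => _ [k _ <-]; rewrite /v.
    have := bnd 0%N k i j; rewrite add0n expr0 ler_norml => /andP[h _].
    have : 0 <= q ^+ k / delta * K by rewrite mulr_ge0 // divr_ge0 ?exprn_ge0 // ltW.
    lra.
  have wcv : cvg (w @ \oo).
    apply/cvg_ex; exists (0 / delta * K); apply: cvgM; last exact: cvg_cst.
    apply: cvgM; last exact: cvg_cst.
    by apply: cvg_expr; rewrite ger0_norm.
  have -> : (fun k => x k i j) = v \- w by apply: funext => k; rewrite /v /w /=; ring.
  exact: is_cvgB.
pose Cinf : 'M[R]_(n, m) := \matrix_(i, j) lim ((fun k => x k i j) @ \oo).
have dist : forall k i j, `|x k i j - Cinf i j| <= q ^+ k / delta * K.
  move=> k i j; rewrite mxE; set B := q ^+ k / delta * K.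
  have hge : x k i j - B <= lim ((fun k => x k i j) @ \oo).
    apply: limr_ge; first exact: cvx.
    exists k => // p /= kp; have := bnd k (p - k)%N i j.
    by rewrite subnKC // ler_norml /B => /andP[h _]; lra.
  have hle : lim ((fun k => x k i j) @ \oo) <= x k i j + B.
    apply: limr_le; first exact: cvx.
    exists k => // p /= kp; have := bnd k (p - k)%N i j.
    by rewrite subnKC // ler_norml /B => /andP[_ h]; lra.
  by rewrite ler_norml; apply/andP; split; lra.
have hfix : T Cinf = Cinf.
  apply/matrixP => i j.
  apply/eqP; rewrite -subr_eq0; apply/eqP.
  apply: (@geo0 R q (2 * K / delta * q)) => // k.
  apply: (le_trans (ler_distD (x k.+1 i j) _ _)).
  rewrite xS.
  have hd : forall i j, `|Cinf i j - x k i j| <= q ^+ k / delta * K.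
    by move=> i' j'; rewrite distrC; exact: dist.
  have h1 := Tlip Cinf (x k) _ hd i j.
  have h2 := dist k.+1 i j.
  have -> : 2 * K / delta * q * q ^+ k = q * (q ^+ k / delta * K) + q ^+ k.+1 / delta * K.
    rewrite exprS; field; exact: lt0r_neq0.
  exact: lerD.
exists Cinf; split => //.
- move=> D hD.
  set e := maxnorm (D - Cinf).
  have he : forall i j, `|D i j - Cinf i j| <= e.
    by move=> i j; have := maxnorm_ge (D - Cinf) i j; rewrite !mxE.
  have hq : forall i j, `|D i j - Cinf i j| <= q * e.
    by move=> i j; rewrite -{1}hD -{1}hfix; exact: Tlip.
  have e0' : 0 <= e := maxnorm_ge0 _.
  have heq : e <= q * e.
    apply: maxnorm_le; first by rewrite mulr_ge0.
    by move=> i j; have := hq i j; rewrite !mxE.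
  have ez : e = 0.
    have : delta * e <= 0 by rewrite /q in heq; lra.
    rewrite pmulr_rle0 // => h; apply/eqP; by rewrite eq_le h e0'.
  apply/matrixP => i j; apply/eqP; rewrite -subr_eq0 -normr_eq0 eq_le normr_ge0 andbT.
  by rewrite -ez he.
- move=> i j; rewrite mxE; exact: cvx.
- move=> k; apply: maxnorm_le.
    by rewrite mulr_ge0 ?divr_ge0 ?exprn_ge0 ?(ltW d0) // addr_ge0 ?mulr_ge0.
  move=> i j; have := dist k i j; rewrite !mxE => h; apply: (le_trans h).
  apply: ler_wpM2l; first by rewrite divr_ge0 ?exprn_ge0 ?(ltW d0).
  by rewrite /K; lra.
Qed.
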